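(* Let $\mathbb{F}$ be a field with $\mathrm{char}(\mathbb{F})\neq 2$, let $n\geq 2$ be an integer, and let $L$ be an $n$-dimensional nonnilpotent solvable Lie algebra over $\mathbb{F}$ of breadth $1$. Then $L$ has a basis $\{x,y,z_1,z_2,\ldots,z_{n-2}\}$ such that $[x,y]=x$ and $z_1,z_2,\ldots,z_{n-2}\in Z(L)$.
   Context: For $x\in L$, the breadth of $x$ is $b(x)=\mathrm{rank}(\mathrm{ad}_x)$, and the breadth of $L$ is $b(L)=\max\{b(x)\mid x\in L\}$. $Z(L)$ denotes the center of $L$. *)

(* Defs.v *)
From HB Require Import structures.
From mathcomp Require Import all_boot all_order all_algebra.
Set Implicit Arguments. Unset Strict Implicit. Unset Printing Implicit Defensive.
Import GRing.Theory.
Local Open Scope ring_scope.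

Definition is_lie_bracket (F : fieldType) (V : vectType F) (br : V -> V -> V) : Prop :=
  [/\ (forall (a : F) (x y z : V), br (a *: x + y) z = a *: br x z + br y z),
      (forall (a : F) (x y z : V), br z (a *: x + y) = a *: br z x + br z y),
      (forall x : V, br x x = 0) &
      (forall x y z : V, br x (br y z) + br y (br z x) + br z (br x y) = 0)].

(* [S, T] : the subspace spanned by all brackets [s, t], s in S, t in T
   (by bilinearity it is the span of brackets of basis vectors). *)
Definition lie_comm (F : fieldType) (V : vectType F) (br : V -> V -> V)
  (S T : {vspace V}) : {vspace V} :=
  <<[seq br u v | u <- (vbasis S : seq V), v <- (vbasis T : seq V)]>>%VS.

Definition derived_series (F : fieldType) (V : vectType F) (br : V -> V -> V)
  (k : nat) : {vspace V} := iter k (fun S => lie_comm br S S) fullv.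

Definition lower_central (F : fieldType) (V : vectType F) (br : V -> V -> V)
  (k : nat) : {vspace V} := iter k (fun S => lie_comm br fullv S) fullv.

Definition lie_solvable (F : fieldType) (V : vectType F) (br : V -> V -> V) : Prop :=
  exists k, derived_series br k = 0%VS.

Definition lie_nilpotent (F : fieldType) (V : vectType F) (br : V -> V -> V) : Prop :=
  exists k, lower_central br k = 0%VS.

Definition ad_image (F : fieldType) (V : vectType F) (br : V -> V -> V) (x : V)
  : {vspace V} := <<[seq br x v | v <- (vbasis fullv : seq V)]>>%VS.

Definition breadth_elt (F : fieldType) (V : vectType F) (br : V -> V -> V) (x : V)
  : nat := \dim (ad_image br x).

Definition lie_breadth_is (F : fieldType) (V : vectType F) (br : V -> V -> V)
  (m : nat) : Prop :=
  (forall x : V, (breadth_elt br x <= m)%N) /\ (exists x : V, breadth_elt br x = m).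

Definition in_center (F : fieldType) (V : vectType F) (br : V -> V -> V) (z : V) : Prop :=
  forall y : V, br z y = 0.

(* Main.v *)
Require Import Defs.
From HB Require Import structures.
From mathcomp Require Import all_boot all_order all_algebra.
From Stdlib Require Import Classical.
Import GRing.Theory.
Local Open Scope ring_scope.

Section L.
Context {F : fieldType} {V : vectType F} {br : V -> V -> V} (H' : is_lie_bracket br).
Let H : [/\ (forall (a : F) (x y z : V), br (a *: x + y) z = a *: br x z + br y z),
      (forall (a : F) (x y z : V), br z (a *: x + y) = a *: br z x + br z y),
      (forall x : V, br x x = 0) &
      (forall x y z : V, br x (br y z) + br y (br z x) + br z (br x y) = 0)] := H'.

Lemma brDr u a b : br u (a + b) = br u a + br u b.
Proof. case: H => _ H2 _ _; have := H2 1 a b u; rewrite !scale1r; exact. Qed.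
Lemma brDl u a b : br (a + b) u = br a u + br b u.
Proof. case: H => H1 _ _ _; have := H1 1 a b u; rewrite !scale1r; exact. Qed.
Lemma br0r u : br u 0 = 0.
Proof. have h := brDr u 0 0; rewrite addr0 in h.
by apply: (addrI (br u 0)); rewrite addr0 -h. Qed.
Lemma br0l u : br 0 u = 0.
Proof. have h := brDl u 0 0; rewrite addr0 in h.
by apply: (addrI (br 0 u)); rewrite addr0 -h. Qed.
Lemma brZr u k a : br u (k *: a) = k *: br u a.
Proof. case: H => _ H2 _ _; by have := H2 k a 0 u; rewrite addr0 br0r addr0. Qed.
Lemma brZl u k a : br (k *: a) u = k *: br a u.
Proof. case: H => H1 _ _ _; by have := H1 k a 0 u; rewrite addr0 br0l addr0. Qed.
Lemma brNr u a : br u (- a) = - br u a.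
Proof. by rewrite -scaleN1r brZr scaleN1r. Qed.
Lemma brNl u a : br (- a) u = - br a u.
Proof. by rewrite -scaleN1r brZl scaleN1r. Qed.
Lemma brBr u a b : br u (a - b) = br u a - br u b.
Proof. by rewrite brDr brNr. Qed.
Lemma brBl u a b : br (a - b) u = br a u - br b u.
Proof. by rewrite brDl brNl. Qed.
Lemma brxx a : br a a = 0.
Proof. by case: H. Qed.
Lemma brA a b : br a b = - br b a.
Proof.
have := brxx (a + b); rewrite brDl !brDr !brxx add0r addr0 => /eqP.
by rewrite addr_eq0 => /eqP.
Qed.
Lemma jac x y z : br x (br y z) + br y (br z x) + br z (br x y) = 0.
Proof. by case: H. Qed.

Lemma brsumr u m (f : 'I_m -> V) : br u (\sum_i f i) = \sum_i br u (f i).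
Proof.
elim: m f => [|m IH] f; first by rewrite !big_ord0 br0r.
by rewrite !big_ord_recr /= brDr IH.
Qed.

Lemma ad_span u (X : seq V) d : d \in <<X>>%VS -> br u d \in <<map (br u) X>>%VS.
Proof.
move=> Hd; rewrite (coord_span (X := in_tuple X) Hd) brsumr.
apply: memv_suml => i _; rewrite brZr; apply: memvZ; apply: memv_span.
by apply: map_f; apply: mem_nth; exact: ltn_ord.
Qed.

Lemma line (Hb : forall u, (breadth_elt br u <= 1)%N) u a b :
  br u a != 0 -> exists k, br u b = k *: br u a.
Proof.
move=> Ha.
have mem v : br u v \in ad_image br u.
  rewrite (coord_vbasis (memvf v)) brsumr.
  apply: memv_suml => i _; rewrite brZr; apply: memvZ; apply: memv_span.
  by apply: map_f; apply: mem_nth; rewrite size_tuple.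
have E : <[br u a]>%VS == ad_image br u.
  rewrite eqEdim -memvE mem dim_vline Ha /=.
  exact: Hb.
by apply/vlineP; rewrite (eqP E).
Qed.
End L.

Section M.
Context {F : fieldType} {V : vectType F} {br : V -> V -> V} (H : is_lie_bracket br).
Context (Hb : forall u, (breadth_elt br u <= 1)%N).

Lemma engel2_nil : (forall u v, br u (br u v) = 0) -> lie_nilpotent br.
Proof.
move=> E.
have T u w v : br u (br w v) = - br w (br u v).
  have := E (u + w) v; rewrite !(brDl H) !(brDr H) E E add0r addr0.
  by move/eqP; rewrite addr_eq0 => /eqP.
have Z u w v : br u (br w v) = 0.
  apply/eqP/negP => /negP Ht.
  have Ht' : br w (- br u v) != 0 by rewrite (brNr H) -T.
  have [k Hk] := line H Hb w (- br u v) v Ht'.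
  move/eqP: Ht; apply.
  by rewrite Hk (brZr H) (brNr H) -T E scaler0.
exists 2%N; rewrite /lower_central /=.
apply/eqP; rewrite -subv0; apply/span_subvP => s /allpairsP [[p q] [/= _ Hq ->]].
have Hq' := vbasis_mem Hq.
have := @ad_span _ _ _ H p _ q Hq'.
move/(subvP _); apply; apply/span_subvP => t /mapP [r /allpairsP [[a b] [/= _ _ ->]] ->].
by rewrite Z memv0.
Qed.
End M.

Section C.
Context {F : fieldType} {V : vectType F} {br : V -> V -> V} (H : is_lie_bracket br).
Context (Hb : forall u, (breadth_elt br u <= 1)%N).

Lemma case1 n x y : x != 0 -> br x y = x -> (2 <= n)%N ->
  \dim (fullv : {vspace V}) = n ->
  exists (x y : V) (z : 'I_(n - 2) -> V),
    [/\ basis_of fullv (x :: y :: [seq z i | i <- enum 'I_(n - 2)]),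
        br x y = x &
        forall i : 'I_(n - 2), in_center br (z i)].
Proof.
move=> xn0 Hxy Hn Hdim.
have Hyx : br y x = - x by rewrite (brA H) Hxy.
have Hyx0 : br y x != 0 by rewrite Hyx oppr_eq0.
have hy t : exists k, br y t = k *: x.
  have [k ->] := line H Hb y x t Hyx0.
  by exists (- k); rewrite Hyx scalerN scaleNr.
have hc w : exists c, br w x == c *: x.
  have := jac H w x y; rewrite Hxy.
  have [k ->] := hy w; rewrite (brZr H) (brxx H) scaler0 addr0.
  have [k' ->] := hy (br w x) => /eqP; rewrite addr_eq0 => /eqP ->.
  by exists (- k'); rewrite scaleNr.
have he w : exists e, br w y == e *: x.
  rewrite (brA H); have [k ->] := hy w.
  by exists (- k); rewrite scaleNr.
pose c w := xchoose (hc w).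
pose e w := xchoose (he w).
have Hc w : br w x = c w *: x by apply/eqP; exact: (xchooseP (hc w)).
have He w : br w y = e w *: x by apply/eqP; exact: (xchooseP (he w)).
pose P w := w + c w *: y - e w *: x.
have HPx w : br (P w) x = 0.
  by rewrite /P (brBl H) (brDl H) !(brZl H) Hc Hyx (brxx H) scaler0 subr0 scalerN subrr.
have HPy w : br (P w) y = 0.
  by rewrite /P (brBl H) (brDl H) !(brZl H) He Hxy (brxx H) scaler0 addr0 subrr.
have Hcomm w w' : br (P w) (P w') = 0.
  have h1 : br (P w + y) x = - x by rewrite (brDl H) HPx add0r Hyx.
  have h0 : br (P w + y) x != 0 by rewrite h1 oppr_eq0.
  have [k Hk] := line H Hb _ _ (P w') h0.
  rewrite h1 (brDl H) (brA H y (P w')) HPy oppr0 addr0 in Hk.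
  have := jac H y (P w) (P w').
  rewrite Hk HPy (br0r H) (brA H y (P w)) HPy oppr0 (br0r H) !addr0.
  rewrite (brZr H) (brNr H) Hyx opprK => /eqP; rewrite scaler_eq0 (negbTE xn0) orbF => /eqP ->.
  by rewrite scale0r.
have Hcent w v : br (P w) v = 0.
  have -> : v = P v - c v *: y + e v *: x.
    by rewrite /P (addrAC _ (- _)) addrNK addrK.
  by rewrite (brDr H) (brBr H) !(brZr H) Hcomm HPx HPy !scaler0 subrr addr0.
have yn0 : y != 0.
  by apply: contra xn0 => /eqP y0; rewrite -Hxy y0 (br0r H).
have Hfree : free [:: x; y].
  rewrite free_cons seq1_free yn0 andbT span_seq1.
  apply/negP => /vlineP [k xk]; move/eqP: xn0; apply.
  by rewrite -Hxy {1}xk (brZl H) (brxx H) scaler0.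
pose X2 := <<[:: x; y]>>%VS.
have dX2 : \dim X2 = 2%N by apply/eqP; exact: Hfree.
pose U := (X2^C)%VS.
have dU : \dim U = (n - 2)%N by rewrite dimv_compl dX2 Hdim.
pose z (i : 'I_(n - 2)) := P (vbasis U)`_i.
exists x, y, z; split => //; last by move=> i v; exact: Hcent.
rewrite basisEdim /= size_map size_enum_ord Hdim.
have Hs : ((n - 2).+2 <= n)%N by rewrite -addn2 subnK.
rewrite Hs andbT.
set Xs := [:: x, y & _].
have sub2 : (X2 <= <<Xs>>)%VS.
  by apply: sub_span => t; rewrite !inE => /orP [] ->; rewrite ?orbT.
have subU : (U <= <<Xs>>)%VS.
  rewrite -(span_basis (vbasisP U)); apply/span_subvP => t.
  case/(nthP 0) => j; rewrite size_tuple => hj0 <-.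
  have hj : (j < n - 2)%N by rewrite -dU.
  have -> : (vbasis U)`_j = z (Ordinal hj) - c (vbasis U)`_j *: y + e (vbasis U)`_j *: x.
    by rewrite /z /P /= (addrAC _ (- _)) addrNK addrK.
  apply: memvD; first apply: memvB.
  - by apply: memv_span; rewrite !inE; apply/orP; right; apply/orP; right; apply: map_f; rewrite mem_enum.
  - by apply: memvZ; apply: memv_span; rewrite !inE eqxx orbT.
  - by apply: memvZ; apply: memv_span; rewrite !inE eqxx.
apply/subvP => v _.
have : v \in (X2 + U)%VS by rewrite addv_complf memvf.
case/memv_addP => a Ha [b Hb' ->].
apply: memvD; [exact: (subvP sub2) | exact: (subvP subU)].
Qed.
End C.

Theorem theorem2p6 (F : fieldType) (V : vectType F) (n : nat)
  (br : V -> V -> V) :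
  (2%:R : F) != 0 ->
  (2 <= n)%N ->
  \dim (fullv : {vspace V}) = n ->
  is_lie_bracket br ->
  lie_solvable br ->
  ~ lie_nilpotent br ->
  lie_breadth_is br 1 ->
  exists (x y : V) (z : 'I_(n - 2) -> V),
    [/\ basis_of fullv (x :: y :: [seq z i | i <- enum 'I_(n - 2)]),
        br x y = x &
        forall i : 'I_(n - 2), in_center br (z i)].
Proof.
move=> _ Hn Hdim H _ Hnn [Hb _].
case: (classic (exists u v, br u (br u v) != 0)) => [[u [v Huv]] | Hno]; last first.
  exfalso; apply: Hnn; apply: (engel2_nil H Hb) => u v.
  apply/eqP/negP => /negP Huv; apply: Hno; by exists u, v.
have an0 : br u v != 0 by apply: contra Huv => /eqP ->; rewrite (br0r H).
have [mu Hmu] := line H Hb u v (br u v) an0.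
have mun0 : mu != 0 by apply: contra Huv => /eqP m0; rewrite Hmu m0 scale0r.
apply: (case1 H Hb n (br u v) (- mu^-1 *: u)) => //.
by rewrite (brZr H) (brA H _ u) Hmu scalerN scaleNr opprK scalerA mulVf // scale1r.
Qed.
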